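(* Let $h\in\mathcal H$, $d=\operatorname{hdepth}(h)$, $k_0=k_0(h)$ and $h_0=h(k_0)$. Then for every integer $k$ with $k_0\le k\le d$ we have $h(k)\ge \binom{d-k_0}{k-k_0}h_0$.
   Context: $\mathcal H$ denotes the set of nonzero functions $h:\mathbb Z\to\mathbb Z_{\ge 0}$ such that $h(j)=0$ for all sufficiently negative $j$. For $h\in\mathcal H$ and integers $k\le d$, set $\beta_k^d(h)=\sum_{j\le k}(-1)^{k-j}\binom{d-j}{k-j}h(j)$, and $\operatorname{hdepth}(h)=\max\{d\in\mathbb Z:\ \beta_k^d(h)\ge 0\text{ for all integers }k\le d\}$. Also $k_0(h)=\min\{j: h(j)>0\}$. *)

(* Defs.v *)
From Stdlib Require Import ClassicalEpsilon.
From mathcomp Require Import all_boot all_order all_algebra.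
Set Implicit Arguments. Unset Strict Implicit. Unset Printing Implicit Defensive.
Import Order.TTheory GRing.Theory Num.Theory.
Local Open Scope ring_scope.

Definition eventually_zero_neg (h : int -> nat) : Prop :=
  exists N : int, forall j : int, j < N -> h j = 0%N.

Definition inH (h : int -> nat) : Prop :=
  (exists j : int, h j <> 0%N) /\ eventually_zero_neg h.

(* a (classically chosen) bound below which h vanishes, if any *)
Definition lowbd (h : int -> nat) : int :=
  epsilon (inhabits 0) (fun N : int => forall j : int, j < N -> h j = 0%N).

(* beta_k^d(h) = sum_{j <= k} (-1)^(k-j) C(d-j, k-j) h(j); the terms with
   j < lowbd h vanish (for h in H), so the sum is the finite sum over
   lowbd h <= j <= k. *)
Definition beta (h : int -> nat) (k d : int) : int :=
  if lowbd h <= k then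
    \sum_(i < (absz (k - lowbd h)).+1)
       let j := lowbd h + i%:Z in
       (-1) ^+ (absz (k - j)) * ('C(absz (d - j), absz (k - j)))%:Z * (h j)%:Z
  else 0.

Definition hdepth_ok (h : int -> nat) (d : int) : Prop :=
  forall k : int, k <= d -> 0 <= beta h k d.

Definition is_hdepth (h : int -> nat) (d : int) : Prop :=
  hdepth_ok h d /\ forall d' : int, hdepth_ok h d' -> d' <= d.

Definition is_k0 (h : int -> nat) (k0 : int) : Prop :=
  (0 < h k0)%N /\ forall j : int, (0 < h j)%N -> k0 <= j.

(* Main.v *)
Require Import Defs.
From Stdlib Require Import ClassicalEpsilon.
From mathcomp Require Import all_boot all_order all_algebra.
Import Order.TTheory GRing.Theory Num.Theory.
From mathcomp Require Import zify ring.

Lemma binid (A N i : nat) : i <= N -> N <= A ->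
  'C(A - i, N - i) * 'C(A, i) = 'C(A, N) * 'C(N, i).
Proof.
move=> iN NA.
have e1 := bin_fact (leq_trans iN NA).
have e2 : N - i <= A - i by lia.
have e2' := bin_fact e2.
have e3 := bin_fact NA.
have e4 := bin_fact iN.
have E : A - i - (N - i) = A - N by lia.
rewrite E in e2'.
apply/eqP; rewrite -(eqn_pmul2r (_ : 0 < i`! * (N-i)`! * (A-N)`!)); last first.
  by rewrite !muln_gt0 !fact_gt0.
apply/eqP; transitivity A`!.
  by rewrite -e1 -e2'; ring.
by rewrite -e3 -e4; ring.
Qed.

Local Open Scope ring_scope.

Lemma altsum (N : nat) : \sum_(i < N.+1) (-1) ^+ i *+ 'C(N, i) = (N == 0%N)%:R :> int.
Proof. by rewrite -exprD1n addNr expr0n. Qed.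

Lemma invform (D n : nat) (a : nat -> int) : (n <= D)%N ->
  \sum_(m < n.+1) 'C(D - m, n - m)%:R *
     (\sum_(l < m.+1) (-1) ^+ (m - l) * 'C(D - l, m - l)%:R * a l) = a n.
Proof.
move=> nD.
transitivity (\sum_(m < n.+1) \sum_(l < n.+1)
   (if (l <= m)%N then 'C(D - m, n - m)%:R *
       ((-1) ^+ (m - l) * 'C(D - l, m - l)%:R * a l) else 0)).
  apply: eq_bigr => m _; rewrite mulr_sumr (big_ord_widen n.+1 (fun l : nat => 'C(D - m, n - m)%:R *
       ((-1) ^+ (m - l) * 'C(D - l, m - l)%:R * a l)) (ltn_ord m)) big_mkcond.
  by apply: eq_bigr => l _; rewrite ltnS.
rewrite exchange_big /=.
transitivity (\sum_(l < n.+1) ((l == n :> nat)%:R * a l)); last first.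
  rewrite big_ord_recr /= eqxx mul1r big1 ?add0r // => l _.
  by rewrite /= ltn_eqF ?mul0r.
apply: eq_bigr => l _.
have ln : (l <= n)%N by rewrite -ltnS.
rewrite -big_mkcond /= -(big_mkord (fun m => l <= m)%N (fun m : nat => 'C(D - m, n - m)%:R *
       ((-1) ^+ (m - l) * 'C(D - l, m - l)%:R * a l))).
rewrite (@big_cat_nat _ _ _ l 0 n.+1) //=; last by apply: leqW.
rewrite big_nat_cond big1 ?add0r; last first.
  by move=> i /andP[/andP[_ il]]; rewrite leqNgt il.
rewrite big_nat_cond (eq_bigl (fun i => (l <= i < n.+1)%N && xpredT i)); last first.
  by move=> i /=; rewrite andbAC andbb andbT.
rewrite -{1}[nat_of_ord l]add0n big_addn big_mkord.
transitivity (\sum_(i < n.+1 - l) (((-1) ^+ i *+ 'C(n - l, i)) * ('C(D - l, n - l)%:R * a l))).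
  apply: eq_big => [i|i _]; first by rewrite andbT; apply/andP; split; have := ltn_ord i; lia.
  have il : (i + l <= n)%N.
    have := ltn_ord i; lia.
  rewrite addnK !(addnC i) !subnDA.
  have := binid (D - l) (n - l) i ltac:(lia) ltac:(lia).
  move/(congr1 (fun x => x%:R : int)); rewrite !natrM => H.
  rewrite -mulr_natr.
  transitivity ((-1) ^+ i * a l * ('C(D - l - i, n - l - i)%:R * 'C(D - l, i)%:R)).
    by ring.
  by rewrite H; ring.
rewrite -mulr_suml subSn // altsum subn_eq0.
case: (ltngtP l n) => [ln'|nl|->]; last by rewrite subnn bin0 !mul1r.
  by rewrite !mul0r.
by move: ln; rewrite leqNgt nl.
Qed.

Theorem proposition1p7 (h : int -> nat) (d k0 : int) :
  inH h -> is_hdepth h d -> is_k0 h k0 ->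
  forall k : int, k0 <= k -> k <= d ->
    ('C(absz (d - k0), absz (k - k0)) * h k0 <= h k)%N.
Proof.
move=> [_ Hev] [Hok _] [Hk0pos Hk0min] k k0k kd.
have HL : forall j : int, j < lowbd h -> h j = 0%N.
  exact: (epsilon_spec _ _ Hev).
set L := lowbd h in HL.
have Lk0 : L <= k0.
  rewrite leNgt; apply/negP => /HL; move: Hk0pos; case: (h k0) => //.
set m0 := absz ((k0 - L)%R).
set n := absz ((k - L)%R).
set D := absz ((d - L)%R).
have ek0 : k0 = L + m0%:Z by rewrite /m0; lia.
have ek : k = L + n%:Z by rewrite /n; lia.
have ed : d = L + D%:Z by rewrite /D; lia.
have m0n : (m0 <= n)%N by rewrite /m0 /n; lia.
have nD : (n <= D)%N by rewrite /n /D; lia.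
pose a (i : nat) : int := (h (L + i%:Z))%:Z.
have Hbeta : forall m : nat, (m <= D)%N -> beta h (L + m%:Z) d =
   \sum_(l < m.+1) (-1) ^+ (m - l) * 'C(D - l, m - l)%:R * a l.
  move=> m mD; rewrite /beta -/L.
  have -> : (L <= L + m%:Z) = true by lia.
  have -> : absz ((L + m%:Z - L)%R) = m by lia.
  apply: eq_bigr => l _ /=.
  have lm : (l <= m)%N by rewrite -ltnS.
  have -> : absz ((L + m%:Z - (L + l%:Z))%R) = (m - l)%N by lia.
  have -> : absz ((d - (L + l%:Z))%R) = (D - l)%N by rewrite ed; lia.
  by rewrite natz.
have bge0 : forall m : nat, (m <= D)%N ->
    0 <= \sum_(l < m.+1) (-1) ^+ (m - l) * 'C(D - l, m - l)%:R * a l.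
  move=> m mD; rewrite -Hbeta //; apply: Hok; rewrite ed; lia.
have bm0 : \sum_(l < m0.+1) (-1) ^+ (m0 - l) * 'C(D - l, m0 - l)%:R * a l = a m0.
  rewrite big_ord_recr /= subnn bin0 expr0 !mul1r big1 ?add0r // => l _.
  rewrite /a.
  have -> : h (L + (widen_ord (leqnSn m0) l)%:Z) = 0%N; last by rewrite mulr0.
  apply/eqP; rewrite -leqn0 leqNgt; apply/negP => /Hk0min.
  have := ltn_ord l; rewrite ek0 /=; lia.
rewrite -lez_nat PoszM.
have -> : (h k)%:Z = a n by rewrite /a ek.
have -> : (h k0)%:Z = a m0 by rewrite /a ek0.
rewrite -(invform _ _ a nD) -bm0.
have -> : absz ((d - k0)%R) = (D - m0)%N by rewrite ed ek0; lia.
have -> : absz ((k - k0)%R) = (n - m0)%N by rewrite ek ek0; lia.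
have m0lt : (m0 < n.+1)%N by rewrite ltnS.
rewrite (bigD1 (Ordinal m0lt)) //= -natz lerDl.
apply: sumr_ge0 => i _; apply: mulr_ge0; first exact: ler0n.
apply: bge0; have := ltn_ord i; lia.
Qed.
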